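(* Let $\underline t\in(\mathbb{C}^* )^4$ and let $C_{\underline t}=\{R_{\underline t}=0\}\subset\mathbb{C}^3$. For $\{i,j,k\}=\{1,2,3\}$ let $\gamma_i$ be the automorphism of $C_{\underline t}$ fixing $X_j,X_k$ and sending $X_i\mapsto -X_i+X_jX_k+p_i$. Then the group homomorphism $K\to \mathrm{Aut}(C_{\underline t})$ determined by $g_i\mapsto\gamma_i$ ($i=1,2,3$) is injective.
   Context: For $\underline t=(k_0,k_1,u_0,u_1)$, put $\bar k_i=k_i-k_i^{-1}$, $\bar u_i=u_i-u_i^{-1}$, $p_1=\bar u_0\bar k_0+\bar k_1\bar u_1$, $p_2=\bar u_1\bar u_0+\bar k_0\bar k_1$, $p_3=\bar k_0\bar u_1+\bar k_1\bar u_0$, $p_0=\bar k_0^2+\bar k_1^2+\bar u_0^2+\bar u_1^2-\bar k_0\bar k_1\bar u_0\bar u_1$, and $R_{\underline t}=X_1X_2X_3-X_1^2-X_2^2-X_3^2+p_1X_1+p_2X_2+p_3X_3+p_0+4$. (Thus $\gamma_i$ exchanges the two roots of $R_{\underline t}=0$ viewed as a quadratic equation in $X_i$; each $\gamma_i$ is an involution of $C_{\underline t}$.) $K$ is the kernel of the reduction map $PGL(2,\mathbb{Z})\to PGL(2,\mathbb{Z}/2)$; it is freely generated (as a free product of three groups of order $2$) by the images of the involutions $g_1=\begin{pmatrix}1&0\\0&-1\end{pmatrix}$, $g_2=\begin{pmatrix}1&2\\0&-1\end{pmatrix}$, $g_3=\begin{pmatrix}1&0\\2&-1\end{pmatrix}$.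 *)

(* Defs.v *)
(* The complex numbers are modelled as R[i] = complex R
   for an arbitrary R : realType (every realType is a model of the reals). *)
From mathcomp Require Import all_boot all_order all_algebra.
From mathcomp Require Import complex.
From mathcomp Require Import reals.
Set Implicit Arguments. Unset Strict Implicit. Unset Printing Implicit Defensive.
Import Order.TTheory GRing.Theory Num.Theory.
Local Open Scope ring_scope.

Section Defs.
Variable R : realType.
Local Notation C := R[i].

Definition pt := (C * C * C)%type.

Definition bar (k : C) : C := k - k^-1.

Section Params.
Variables k0 k1 u0 u1 : C.

Definition p1 : C := bar u0 * bar k0 + bar k1 * bar u1.
Definition p2 : C := bar u1 * bar u0 + bar k0 * bar k1.
Definition p3 : C := bar k0 * bar u1 + bar k1 * bar u0.
Definition p0 : C := bar k0 ^+ 2 + bar k1 ^+ 2 + bar u0 ^+ 2 + bar u1 ^+ 2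
                     - bar k0 * bar k1 * bar u0 * bar u1.

Definition Rt (x : pt) : C :=
  let: (x1, x2, x3) := x in
  x1 * x2 * x3 - x1 ^+ 2 - x2 ^+ 2 - x3 ^+ 2 + p1 * x1 + p2 * x2 + p3 * x3 + p0 + 4.

(* the involutions gamma_1, gamma_2, gamma_3 (index i : 'I_3 stands for i+1) *)
Definition gamma (i : 'I_3) (x : pt) : pt :=
  let: (x1, x2, x3) := x in
  match val i with
  | 0 => (- x1 + x2 * x3 + p1, x2, x3)
  | 1 => (x1, - x2 + x1 * x3 + p2, x3)
  | _ => (x1, x2, - x3 + x1 * x2 + p3)
  end.

Definition gamma_word (w : seq 'I_3) : pt -> pt :=
  foldr (fun i f => gamma i \o f) id w.
End Params.
End Defs.

Definition mx2 (a b c d : int) : 'M[int]_2 :=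
  \matrix_(i < 2, j < 2)
    if i == 0 :> nat then (if j == 0 :> nat then a else b)
    else (if j == 0 :> nat then c else d).

(* g_1, g_2, g_3 (index i : 'I_3 stands for i+1) *)
Definition gmat (i : 'I_3) : 'M[int]_2 :=
  match val i with
  | 0 => mx2 1 0 0 (-1)
  | 1 => mx2 1 2 0 (-1)
  | _ => mx2 1 0 2 (-1)
  end.

Definition gmat_word (w : seq 'I_3) : 'M[int]_2 := \prod_(i <- w) gmat i.

(* trivial in PGL(2,Z) = GL(2,Z)/{±1} *)
Definition trivial_PGL (M : 'M[int]_2) : Prop := M = 1 \/ M = - 1.

(* Main.v *)
Require Import Defs.
From mathcomp Require Import all_boot all_order all_algebra.
From mathcomp Require Import complex.
From mathcomp Require Import reals.
From mathcomp Require Import ring lra zify.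
Set Implicit Arguments. Unset Strict Implicit. Unset Printing Implicit Defensive.
Import Order.TTheory GRing.Theory Num.Theory.
Import Normc.
Local Open Scope ring_scope.

Section Proof.
Variable R : realType.
Variables k0 k1 u0 u1 : R[i].
Local Open Scope complex_scope.

Lemma normc_ge0 (x : R[i]) : 0 <= normc x.
Proof. by case: x => a b /=; rewrite sqrtr_ge0. Qed.

Lemma normc_real (s : R) : 0 <= s -> normc (s%:C) = s.
Proof. by move=> hs /=; rewrite expr0n /= addr0 sqrtr_sqr ger0_norm. Qed.

Definition P := normc (p1 k0 k1 u0 u1) + normc (p2 k0 k1 u0 u1) + normc (p3 k0 k1 u0 u1).
Definition M := P + 4.

Lemma P_ge0 : 0 <= P.
Proof. by rewrite /P !addr_ge0 ?normc_ge0. Qed.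

Lemma core (xi xk xj pj : R[i]) : normc pj <= P -> M <= normc xi -> M <= normc xk ->
  2 * normc xj <= normc xi -> 2 * normc xi <= normc (- xj + xi * xk + pj).
Proof.
move=> hp hi hk hj.
have e : xi * xk = (- xj + xi * xk + pj) + xj - pj by ring.
have t := le_normcD (- xj + xi * xk + pj + xj) (- pj).
have t2 := le_normcD (- xj + xi * xk + pj) xj.
rewrite normcN -e normcM in t.
have := P_ge0; rewrite /M in hi hk.
have := normc_ge0 xj.
nra.
Qed.

Lemma core' (xi xk xj pj : R[i]) : normc pj <= P -> M <= normc xi -> M <= normc xk ->
  2 * normc xj <= normc xi -> 2 * normc xi <= normc (- xj + xk * xi + pj).
Proof. by rewrite [xk * xi]mulrC; apply: core. Qed.

Definition S (i : 'I_3) (x : pt R) : Prop :=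
  let: (a, b, c) := x in
  [/\ M <= normc a, M <= normc b, M <= normc c &
  match val i with
  | 0 => 2 * normc b <= normc a /\ 2 * normc c <= normc a
  | 1 => 2 * normc a <= normc b /\ 2 * normc c <= normc b
  | _ => 2 * normc a <= normc c /\ 2 * normc b <= normc c
  end].

Lemma hp1 : normc (p1 k0 k1 u0 u1) <= P.
Proof. rewrite /P; have := normc_ge0 (p2 k0 k1 u0 u1); have := normc_ge0 (p3 k0 k1 u0 u1); lra. Qed.
Lemma hp2 : normc (p2 k0 k1 u0 u1) <= P.
Proof. rewrite /P; have := normc_ge0 (p1 k0 k1 u0 u1); have := normc_ge0 (p3 k0 k1 u0 u1); lra. Qed.
Lemma hp3 : normc (p3 k0 k1 u0 u1) <= P.
Proof. rewrite /P; have := normc_ge0 (p2 k0 k1 u0 u1); have := normc_ge0 (p1 k0 k1 u0 u1); lra. Qed.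

Lemma step (i j : 'I_3) x : j != i -> S i x -> S j (gamma k0 k1 u0 u1 j x).
Proof.
case: x => [[a b] c].
have hM : 0 < M by rewrite /M; have := P_ge0; lra.
case: i => [[|[|[|i]]] Hi] //; case: j => [[|[|[|j]]] Hj] //= _ [ha hb hc [h1 h2]].
- have h := core hp2 ha hc h1; split => //; try split; lra.
- have h := core hp3 ha hb h2; split => //; try split; lra.
- have h := core hp1 hb hc h1; split => //; try split; lra.
- have h := core' hp3 hb ha h2; split => //; try split; lra.
- have h := core' hp1 hc hb h1; split => //; try split; lra.
- have h := core' hp2 hc ha h2; split => //; try split; lra.
Qed.

Lemma S_uniq (i j : 'I_3) x : j != i -> S i x -> S j x -> False.
Proof.
case: x => [[a b] c].
have hM : 0 < M by rewrite /M; have := P_ge0; lra.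
case: i => [[|[|[|i]]] Hi] //; case: j => [[|[|[|j]]] Hj] //= _ [ha hb hc [h1 h2]] [_ _ _ [h3 h4]]; lra.
Qed.

Definition neq3 : rel 'I_3 := fun u v => u != v.

Lemma pingpong (w : seq 'I_3) a i x : S i x -> path neq3 a (rcons w i) ->
  S a (gamma k0 k1 u0 u1 a (gamma_word k0 k1 u0 u1 w x)).
Proof.
elim: w a => [|b w IH] a hS /=.
  by case/andP => h _; apply: step; [exact: h | exact: hS].
case/andP => hab hp.
apply: step; [exact: hab | exact (IH b hS hp)].
Qed.

Lemma quad (B Q : R[i]) : exists r, r ^+ 2 - B * r + Q = 0 /\ normc B <= 2 * normc r.
Proof.
set d := sqrtc (B ^+ 2 - 4 * Q).
have hd : d ^+ 2 = B ^+ 2 - 4 * Q by rewrite sqr_sqrtc.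
have h2 : (2 : R[i]) != 0 by rewrite pnatr_eq0.
have h4 : (4 : R[i]) != 0 by rewrite pnatr_eq0.
have root : forall r, (r = (B + d) / 2 \/ r = (B - d) / 2) -> r ^+ 2 - B * r + Q = 0.
  move=> r [->|->].
    have -> : ((B + d) / 2) ^+ 2 - B * ((B + d) / 2) + Q = (d ^+ 2 - (B ^+ 2 - 4 * Q)) / 4 by field.
    by rewrite hd subrr mul0r.
  have -> : ((B - d) / 2) ^+ 2 - B * ((B - d) / 2) + Q = (d ^+ 2 - (B ^+ 2 - 4 * Q)) / 4 by field.
  by rewrite hd subrr mul0r.
have eB : B = (B + d) / 2 + (B - d) / 2 by field.
have t := le_normcD ((B + d) / 2) ((B - d) / 2).
rewrite -eB in t.
case: (lerP (normc ((B - d) / 2)) (normc ((B + d) / 2))) => h.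
  exists ((B + d) / 2); split; [apply: root; left => // | lra].
exists ((B - d) / 2); split; [apply: root; right => // | lra].
Qed.

Lemma big_root (s p r : R[i]) : normc s = M -> normc p <= P ->
  normc (s * s + p) <= 2 * normc r -> 2 * M <= normc r.
Proof.
move=> hs hp h.
have hP := P_ge0.
have t := le_normcD (s * s + p) (- p).
rewrite normcN addrK normcM hs in t.
rewrite /M in t h *.
nra.
Qed.

Lemma start (b : 'I_3) : exists x, Rt k0 k1 u0 u1 x = 0 /\ S b x.
Proof.
have hM : 0 <= M by rewrite /M; have := P_ge0; lra.
set s := M%:C.
have ns : normc s = M by rewrite normc_real.
clearbody s.
set q1 := p1 k0 k1 u0 u1; set q2 := p2 k0 k1 u0 u1; set q3 := p3 k0 k1 u0 u1.
set q0 := p0 k0 k1 u0 u1.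
case: b => [[|[|[|b]]] Hb] //.
- have [r [hr hn]] := quad (s * s + q1) (2 * s ^+ 2 - (q2 + q3) * s - q0 - 4).
  have h := big_root ns hp1 hn.
  exists (r, s, s); split.
    rewrite /Rt -/q1 -/q2 -/q3 -/q0.
    rewrite -[RHS]oppr0 -hr; ring.
  rewrite /S /= ns; split; try split; lra.
- have [r [hr hn]] := quad (s * s + q2) (2 * s ^+ 2 - (q1 + q3) * s - q0 - 4).
  have h := big_root ns hp2 hn.
  exists (s, r, s); split.
    rewrite /Rt -/q1 -/q2 -/q3 -/q0.
    rewrite -[RHS]oppr0 -hr; ring.
  rewrite /S /= ns; split; try split; lra.
- have [r [hr hn]] := quad (s * s + q3) (2 * s ^+ 2 - (q1 + q2) * s - q0 - 4).
  have h := big_root ns hp3 hn.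
  exists (s, s, r); split.
    rewrite /Rt -/q1 -/q2 -/q3 -/q0.
    rewrite -[RHS]oppr0 -hr; ring.
  rewrite /S /= ns; split; try split; lra.
Qed.
End Proof.

Lemma gammaK (R : realType) (k0 k1 u0 u1 : R[i]) i x :
  gamma k0 k1 u0 u1 i (gamma k0 k1 u0 u1 i x) = x.
Proof.
case: x => [[a b] c]; case: i => [[|[|[|i]]] Hi] //=; congr (_, _, _); ring.
Qed.

Lemma gmatK i : gmat i * gmat i = 1.
Proof.
case: i => [[|[|[|i]]] Hi] //; rewrite /gmat /mx2 /=;
apply/matrixP => a c; rewrite !mxE !big_ord_recr big_ord0 /= !mxE;
by case: a => [[|[|a]] Ha] //; case: c => [[|[|c]] Hc].
Qed.

Lemma unsorted_split (w : seq 'I_3) : ~~ sorted neq3 w ->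
  exists a b i, w = a ++ i :: i :: b.
Proof.
elim: w => [|x w IH] //=.
case: w IH => [|y w] IH //=.
case/nandP.
  by rewrite negbK => /eqP ->; exists [::], w, y.
move=> h; have [a [b [i e]]] := IH h.
by exists (x :: a), b, i; rewrite e.
Qed.

Lemma gamma_word_cancel (R : realType) (k0 k1 u0 u1 : R[i]) a b i x :
  gamma_word k0 k1 u0 u1 (a ++ i :: i :: b) x = gamma_word k0 k1 u0 u1 (a ++ b) x.
Proof.
have cat : forall s1 s2 y, gamma_word k0 k1 u0 u1 (s1 ++ s2) y =
    gamma_word k0 k1 u0 u1 s1 (gamma_word k0 k1 u0 u1 s2 y).
  by elim=> [|c s1 IH] s2 y //=; rewrite /= -IH.
rewrite !cat; congr (gamma_word _ _ _ _ _ _).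
exact: gammaK.
Qed.

Lemma gmat_word_cancel a b i : gmat_word (a ++ i :: i :: b) = gmat_word (a ++ b).
Proof. by rewrite /gmat_word !big_cat !big_cons /= [gmat i * (gmat i * _)]mulrA gmatK mul1r. Qed.

Theorem corollary2p4 (R : realType) (k0 k1 u0 u1 : R[i])
    (hk0 : k0 != 0) (hk1 : k1 != 0) (hu0 : u0 != 0) (hu1 : u1 != 0)
    (w : seq 'I_3) :
  (forall x : pt R, Rt k0 k1 u0 u1 x = 0 -> gamma_word k0 k1 u0 u1 w x = x) ->
  trivial_PGL (gmat_word w).
Proof.
move=> H; left.
move: {2}(size w) (leqnn (size w)) => n; elim: n w H => [|n IH] w H hs.
  by case: w H hs => // _ _; rewrite /gmat_word big_nil.
case hsort: (sorted neq3 w); last first.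
  have [a [b [i e]]] := unsorted_split (negbT hsort).
  subst w; rewrite gmat_word_cancel; apply: IH.
    by move=> x hx; rewrite -(gamma_word_cancel _ _ _ _ _ _ i) H.
  by move: hs; rewrite !size_cat /=; lia.
case: w H hs hsort => [|a w] H hs hsort; first by rewrite /gmat_word big_nil.
exfalso.
have [b /andP [hba hbc]] : exists b : 'I_3, (b != a) && (b != last a w).
  move: (last a w) => c.
  have all3 : [forall a : 'I_3, forall c : 'I_3, [exists b : 'I_3, (b != a) && (b != c)]].
    { apply/forallP => -[[|[|[|a']]] Ha]; apply/forallP => -[[|[|[|c']]] Hc] //; apply/existsP.
      all: first [by exists (@Ordinal 3 0 isT) | by exists (@Ordinal 3 1 isT) | by exists (@Ordinal 3 2 isT)]. }
  by move: all3 => /forallP/(_ a)/forallP/(_ c)/existsP.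
have [x0 [hx0 hS]] := start k0 k1 u0 u1 b.
have hp : path neq3 a (rcons w b) by rewrite rcons_path; apply/andP; split; [exact: hsort | rewrite /neq3 eq_sym].
have := pingpong hS hp.
have -> : gamma k0 k1 u0 u1 a (gamma_word k0 k1 u0 u1 w x0) = gamma_word k0 k1 u0 u1 (a :: w) x0 by [].
rewrite H // => hSa.
exact: (S_uniq hba hSa hS).
Qed.
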